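(* Fix $i\in\{1,\dots,k\}$ and let $\psi_i$ and $\mathcal{M}^\psi_i$ be defined as in the context. Then $|\mathcal{M}^\psi_i|\le 2\epsilon\cdot 2^{kn}$.
   Context: Setting. $\mathcal{N}$ is a directed network containing nodes $s_1,\dots,s_k,t_1,\dots,t_k$. The network $\mathcal{G}$ is obtained from $\mathcal{N}$ by adding new nodes $s,t,A_1,\dots,A_k,B_1,\dots,B_k$ and, for each $i$, the unit-capacity edges $a_i=(s,A_i)$, two parallel edges $x_i,y_i$ from $A_i$ to $B_i$, $z_i=(A_i,s_i)$, $z'_i=(t_i,B_i)$, and $b_i=(B_i,t)$; the incoming edges of $t$ are exactly $b_1,\dots,b_k$. Admissible error patterns $\boldsymbol r=(r_e)$ are those in which at most one edge $e$ has $r_e\neq0$, with $e\notin\{a_1,\dots,a_k,b_1,\dots,b_k\}$. The output of an edge is its input XOR $r_e$. Let $\mathcal{C}$ be a length-$n$ network code on $\mathcal{G}$. The source $s$ has message $m\in\mathcal{M}=[2^{kn}]$, where $[N]=\{1,\dots,N\}$. An edge $e=(u,v)$ of capacity $c_e$ carries a value in $[2^{nc_e}]$ computed from the signals on the incoming edges of $u$ (and from $m$ if $u=s$). The terminal $t$ decodes the tuple received on $b_1,\dots,b_k$ to an estimate of $m$. For an edge $e$, let $e(m,\boldsymbol r)$ denote the signal received on $e$ when message $m$ is sent and error pattern $\boldsymbol r$ occurs, and let $e(m)=e(m,\boldsymbol 0)$. Write $\boldsymbol b(m)=(b_1(m),\dots,b_k(m))$. Let $\mathcal{M}^{\text{good}}$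 be the set of messages $m$ such that $t$ decodes to $m$ under every admissible error pattern when $m$ is sent. Assume $\epsilon\ge0$ and $|\mathcal{M}^{\text{good}}|\ge(1-\epsilon)2^{kn}$. Define $\psi_i:[2^n]\to[2^n]$ by letting $\psi_i(\hat z)$ be a value $\hat b$ maximizing $|\{m\in\mathcal{M}^{\text{good}}: z'_i(m)=\hat z,\ b_i(m)=\hat b\}|$, with ties broken arbitrarily. Let $\mathcal{M}^\psi_i=\{m\in\mathcal{M}^{\text{good}}:\psi_i(z'_i(m))\ne b_i(m)\}$. *)

(* Defs.v *)
From mathcomp Require Import all_boot all_order all_algebra.
Set Implicit Arguments. Unset Strict Implicit. Unset Printing Implicit Defensive.

Definition GV (VN : Type) (k : nat) : Type := (VN + (bool + ('I_k + 'I_k)))%type.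

Definition node_s {VN k} : GV VN k := inr (inl true).
Definition node_t {VN k} : GV VN k := inr (inl false).
Definition node_A {VN k} (i : 'I_k) : GV VN k := inr (inr (inl i)).
Definition node_B {VN k} (i : 'I_k) : GV VN k := inr (inr (inr i)).

(* Kinds of new edges, one of each per index i:
   a_i = (s,A_i), x_i,y_i : A_i -> B_i, z_i = (A_i,s_i), z'_i = (t_i,B_i), b_i = (B_i,t). *)
Inductive ekind := Ka | Kx | Ky | Kz | Kz' | Kb.

Definition GE (EN : Type) (k : nat) : Type := (EN + (ekind * 'I_k))%type.

Definition edge_a {EN k} (i : 'I_k) : GE EN k := inr (Ka, i).
Definition edge_x {EN k} (i : 'I_k) : GE EN k := inr (Kx, i).
Definition edge_y {EN k} (i : 'I_k) : GE EN k := inr (Ky, i).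
Definition edge_z {EN k} (i : 'I_k) : GE EN k := inr (Kz, i).
Definition edge_z' {EN k} (i : 'I_k) : GE EN k := inr (Kz', i).
Definition edge_b {EN k} (i : 'I_k) : GE EN k := inr (Kb, i).

Section Network.
Variables (VN EN : Type) (k : nat).
Variables (tailN headN : EN -> VN) (sN tN : 'I_k -> VN) (cN : EN -> nat).

Definition gtail (e : GE EN k) : GV VN k :=
  match e with
  | inl e0 => inl (tailN e0)
  | inr (Ka, i) => node_s
  | inr (Kx, i) => node_A i
  | inr (Ky, i) => node_A i
  | inr (Kz, i) => node_A i
  | inr (Kz', i) => inl (tN i)
  | inr (Kb, i) => node_B i
  end.

Definition ghead (e : GE EN k) : GV VN k :=
  match e with
  | inl e0 => inl (headN e0)
  | inr (Ka, i) => node_A i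
  | inr (Kx, i) => node_B i
  | inr (Ky, i) => node_B i
  | inr (Kz, i) => inl (sN i)
  | inr (Kz', i) => node_B i
  | inr (Kb, i) => node_t
  end.

Definition gcap (e : GE EN k) : nat :=
  match e with inl e0 => cN e0 | inr _ => 1 end.

Variable n : nat. (* code length *)

(* The signal alphabet of edge e is [2^(n c_e)], represented as the
   bit strings of length n * c_e (so that XOR is bitwise XOR). *)
Definition value (e : GE EN k) : Type := {ffun 'I_(n * gcap e) -> bool}.

Definition vzero (e : GE EN k) : value e := [ffun => false].
Definition vxor (e : GE EN k) (u v : value e) : value e := [ffun j => u j (+) v j].

Definition Msg : finType := 'I_(2 ^ (k * n)).

Definition errpat : Type := forall e : GE EN k, value e.
Definition noerr : errpat := fun e => vzero e.

Definition admissible (r : errpat) : Prop :=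
  (forall e, r e <> vzero e -> forall i, e <> edge_a i /\ e <> edge_b i) /\
  (forall e e', r e <> vzero e -> r e' <> vzero e' -> e = e').

(* A length-n network code on G: local encoding functions.  The encoder of
   e = (u,v) sees the signals on the incoming edges of u, and the message
   (the latter only matters when u = s). *)
Definition encoders : Type :=
  forall e : GE EN k, Msg -> (forall e' : GE EN k, ghead e' = gtail e -> value e') -> value e.

Definition encoder_ok (enc : encoders) : Prop :=
  forall e, gtail e <> node_s -> forall m m' inp, enc e m inp = enc e m' inp.

Definition decoder : Type := (forall i : 'I_k, value (edge_b i)) -> Msg.

(* It is characterized by the local equations: the output of an edge is
   (its encoded input) XOR r_e.  (For an acyclic N this determines sig.) *)
Definition signals_of (enc : encoders) (sig : Msg -> errpat -> errpat) : Prop :=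
  forall m r e, sig m r e = vxor (enc e m (fun e' _ => sig m r e')) (r e).

Definition good (dec : decoder) (sig : Msg -> errpat -> errpat) (m : Msg) : Prop :=
  forall r, admissible r -> dec (fun i => sig m r (edge_b i)) = m.

End Network.

Definition acyclic (VN EN : Type) (tailN headN : EN -> VN) : Prop :=
  exists rk : VN -> nat, forall e, (rk (tailN e) < rk (headN e))%N.

(* Main.v *)
Require Import Defs.
From mathcomp Require Import all_boot all_order all_algebra.
From Stdlib Require Import FunctionalExtensionality.
Import Order.TTheory GRing.Theory Num.Theory.

Definition rho {VN : Type} {k : nat} (rk : VN -> nat) (x : GV VN k) : nat :=
  match x with
  | inl v => (rk v).+2
  | inr (inr (inl _)) => 1
  | _ => 0
  end.

Lemma rank_dec (VN EN : Type) (k : nat) (tailN headN : EN -> VN) (sN tN : 'I_k -> VN)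
  (rk : VN -> nat) (hrk : forall e, (rk (tailN e) < rk (headN e))%N)
  (e e' : GE EN k) :
  ghead headN sN e' = gtail tailN tN e ->
  (forall j, gtail tailN tN e <> node_B j) ->
  (rho rk (gtail tailN tN e') < rho rk (gtail tailN tN e))%N /\
  (forall j, gtail tailN tN e' <> node_B j).
Proof.
move=> h hB.
destruct e as [e0|[kd j]]; destruct e' as [e1|[kd' j']];
  try (destruct kd); try (destruct kd'); simpl in h |- *; try discriminate;
  try (by exfalso; apply: (hB j)).
all: try (case: h => h).
all: split; [|by move=> ?; discriminate].
all: rewrite ?ltnS -?h //.
Qed.

Lemma vxor0 (EN : Type) (k : nat) (cN : EN -> nat) (n : nat) (e : GE EN k) (u : value cN n e) :
  vxor u (vzero cN n e) = u.
Proof. by apply/ffunP => j; rewrite !ffunE addbF. Qed.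

Lemma propag (VN EN : Type) (k : nat)
  (tailN headN : EN -> VN) (sN tN : 'I_k -> VN) (cN : EN -> nat) (n : nat)
  (hacyc : acyclic tailN headN)
  (enc : encoders tailN headN sN tN cN n)
  (sig : Msg k n -> errpat k cN n -> errpat k cN n)
  (hsig : signals_of enc sig) (m : Msg k n) (r : errpat k cN n)
  (hr : forall e, (forall j, ghead headN sN e <> node_B j) -> r e = vzero cN n e) :
  forall e, (forall j, gtail tailN tN e <> node_B j) ->
    sig m r e = vxor (sig m (noerr cN n) e) (r e).
Proof.
case: hacyc => rk hrk.
suff H : forall N e, (rho rk (gtail tailN tN e) < N)%N ->
    (forall j, gtail tailN tN e <> node_B j) ->
    sig m r e = vxor (sig m (noerr cN n) e) (r e).
  by move=> e; apply: (H _ e (ltnSn _)).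
elim=> [//|N IH] e hN hB.
rewrite (hsig m r e) (hsig m (noerr cN n) e).
have -> : (fun e' (_ : ghead headN sN e' = gtail tailN tN e) => sig m r e') =
          (fun e' (_ : ghead headN sN e' = gtail tailN tN e) => sig m (noerr cN n) e').
  apply: functional_extensionality_dep => e'.
  apply: functional_extensionality_dep => h.
  have [h1 h2] := @rank_dec _ _ _ tailN headN sN tN rk hrk _ _ h hB.
  rewrite IH //; last by apply: leq_trans h1 _.
  rewrite hr ?vxor0 //.
  by move=> j; rewrite h; apply: hB.
by rewrite /noerr vxor0.
Qed.

Definition isX (kd : ekind) : bool := if kd is Kx then true else false.
Definition isY (kd : ekind) : bool := if kd is Ky then true else false.

Definition errK {EN : Type} {k : nat} (cN : EN -> nat) (n : nat) (sel : ekind -> bool)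
  (i : 'I_k) (v : {ffun 'I_(n * 1) -> bool}) : errpat k cN n :=
  fun e => match e return value cN n e with
  | inl e0 => vzero cN n (inl e0)
  | inr (kd, j) => if sel kd && (j == i) then v else vzero cN n (inr (kd, j))
  end.

Definition xyker (sel : ekind -> bool) : Prop :=
  exists kd0, (kd0 = Kx \/ kd0 = Ky) /\ forall kd, sel kd -> kd = kd0.

Lemma isX_ok : xyker isX. Proof. by exists Kx; split; [left|case]. Qed.
Lemma isY_ok : xyker isY. Proof. by exists Ky; split; [right|case]. Qed.

Lemma errK_nz {EN : Type} {k : nat} (cN : EN -> nat) (n : nat) sel (i : 'I_k) (v : {ffun 'I_(n * 1) -> bool}) (e : GE EN k) :
  errK cN n sel i v e <> vzero cN n e -> exists kd, [/\ sel kd, e = inr (kd, i) & True].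
Proof.
case: e => [e0|[kd j]] /=; first by [].
case: ifP => [/andP[hs /eqP ->] _|_ //]; by exists kd.
Qed.

Lemma errK_adm {EN : Type} {k : nat} (cN : EN -> nat) (n : nat) sel (i : 'I_k) (v : {ffun 'I_(n * 1) -> bool}) :
  xyker sel -> admissible (errK cN n sel i v).
Proof.
move=> [kd0 [hk hsel]]; split.
  move=> e /errK_nz [kd [hs -> _]] j.
  by rewrite (hsel _ hs); case: hk => ->; split; move=> [].
move=> e e' /errK_nz [kd [hs -> _]] /errK_nz [kd' [hs' -> _]].
by rewrite (hsel _ hs) (hsel _ hs').
Qed.

Lemma errK_hr {EN : Type} {k : nat} (VN : Type) (headN : EN -> VN) (sN : 'I_k -> VN)
  (cN : EN -> nat) (n : nat) sel (i : 'I_k) (v : {ffun 'I_(n * 1) -> bool}) :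
  xyker sel -> forall e, (forall j, ghead headN sN e <> node_B j) ->
    errK cN n sel i v e = vzero cN n e.
Proof.
move=> hsel e hB; case: (boolP (errK cN n sel i v e == vzero cN n e)) => [/eqP //|/eqP hnz].
have [kd [hs he _]] := @errK_nz _ _ cN n sel i v e hnz; subst e.
case: hsel => [kd0 [hk hsel]]; move: (hsel _ hs) => ?; subst.
by case: hk => ?; subst; exfalso; apply: (hB i).
Qed.

Lemma bsig (VN EN : Type) (k : nat)
  (tailN headN : EN -> VN) (sN tN : 'I_k -> VN) (cN : EN -> nat) (n : nat)
  (hacyc : acyclic tailN headN)
  (enc : encoders tailN headN sN tN cN n)
  (sig : Msg k n -> errpat k cN n -> errpat k cN n)
  (hsig : signals_of enc sig) (m : Msg k n) (r : errpat k cN n)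
  (hr : forall e, (forall j, ghead headN sN e <> node_B j) -> r e = vzero cN n e)
  (j : 'I_k) :
  sig m r (edge_b j) =
  vxor (enc (edge_b j) m (fun e' _ => vxor (sig m (noerr cN n) e') (r e'))) (r (edge_b j)).
Proof.
rewrite {1}hsig; congr vxor; congr (enc _ m).
apply: functional_extensionality_dep => e'.
apply: functional_extensionality_dep => h.
apply: (@propag VN EN k tailN headN sN tN cN n hacyc enc sig hsig m r hr e').
move=> j'; move: h.
by case: e' => [e0|[[] j'']] //= _.
Qed.

Lemma card_fib (T U : finType) (f : T -> U) (A : {set T}) :
  #|A| = (\sum_(u : U) #|[set x in A | f x == u]|)%N.
Proof.
rewrite -sum1_card (partition_big f xpredT) //=; apply: eq_bigr => u _.
rewrite -sum1_card; apply: eq_bigl => x; by rewrite !inE.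
Qed.

From mathcomp Require Import lra zify.
Local Open Scope ring_scope.

Theorem lemma1
  (R : realFieldType)
  (VN EN : Type) (k : nat)
  (tailN headN : EN -> VN) (sN tN : 'I_k -> VN) (cN : EN -> nat) (n : nat)
  (hacyc : acyclic tailN headN)
  (enc : encoders tailN headN sN tN cN n)
  (henc : encoder_ok enc)
  (dec : decoder k cN n)
  (sig : Msg k n -> errpat k cN n -> errpat k cN n)
  (hsig : signals_of enc sig)
  (Mgood : {set Msg k n})
  (hgood : forall m, m \in Mgood <-> good dec sig m)
  (eps : R) (heps : 0 <= eps)
  (hMgood : (1 - eps) * (2 ^ (k * n))%N%:R <= (#|Mgood|%:R : R))
  (i : 'I_k)
  (psi : {ffun 'I_(n * 1) -> bool} -> {ffun 'I_(n * 1) -> bool})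
  (hpsi : forall (zh bh : {ffun 'I_(n * 1) -> bool}),
     (#|[set m in Mgood | (sig m (noerr cN n) (edge_z' i) == zh)
                          && (sig m (noerr cN n) (edge_b i) == bh)]|
     <= #|[set m in Mgood | (sig m (noerr cN n) (edge_z' i) == zh)
                          && (sig m (noerr cN n) (edge_b i) == psi zh)]|)%N) :
  (#|[set m in Mgood | psi (sig m (noerr cN n) (edge_z' i))
                         != sig m (noerr cN n) (edge_b i)]|%:R : R)
    <= 2 * eps * (2 ^ (k * n))%N%:R.
Proof.
pose V1 := {ffun 'I_(n * 1) -> bool}.
pose Tup := {ffun 'I_k -> V1}.
pose T : Msg k n -> Tup := fun m => [ffun j => (sig m (noerr cN n) (edge_b j) : V1)].
pose decT : Tup -> Msg k n := fun t => dec (fun j => t j).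
have goodE : forall m r, m \in Mgood -> admissible r ->
    decT [ffun j => (sig m r (edge_b j) : V1)] = m.
  move=> m r /hgood hm hr; rewrite -{2}(hm r hr) /decT; congr dec.
  by apply: functional_extensionality_dep => j; rewrite ffunE.
have adm0 : admissible (noerr cN n) by split => e h; case: h.
have decTT : forall m, m \in Mgood -> decT (T m) = m by move=> m hm; apply: goodE.
pose NR := [set m in Mgood | [exists t : Tup, (decT t == m) && (t != T m)]].
have rigid : forall m t, m \in Mgood -> m \notin NR -> decT t = m -> t = T m.
  move=> m t hm hn ht; apply/eqP; apply: contraNT hn => hne.
  by rewrite inE hm /=; apply/existsP; exists t; rewrite ht eqxx.
have hcount : (#|Mgood| + #|NR| <= 2 ^ (k * n))%N.
  pose S1 := T @: Mgood.
  pose S2 := [set t : Tup | (decT t \in NR) && (t != T (decT t))].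
  have c1 : #|S1| = #|Mgood|.
    apply: card_in_imset => a b ha hb e.
    by rewrite -(decTT a ha) -(decTT b hb) e.
  have c2 : (#|NR| <= #|S2|)%N.
    apply: (leq_trans _ (leq_imset_card decT S2)); apply: subset_leq_card.
    apply/subsetP => m hm; have := hm; rewrite inE => /andP[_ /existsP[t /andP[/eqP ht hne]]].
    by apply/imsetP; exists t; rewrite // inE ht hm hne.
  have c3 : S1 :&: S2 = set0.
    apply/setP => t; rewrite !inE; apply/negbTE; apply/negP => /andP[/imsetP[m hm ->]].
    by rewrite (decTT m hm) eqxx andbF.
  have := cardsUI S1 S2; rewrite c3 cards0 addn0 c1 => e.
  have hc : #|Tup| = (2 ^ (k * n))%N.
    by rewrite card_ffun card_ffun card_bool !card_ord muln1 -expnM mulnC.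
  have := max_card (S1 :|: S2); rewrite e hc => h.
  by apply: leq_trans h; rewrite leq_add2l.
have hkey : forall m1 m2, m1 \in Mgood -> m1 \notin NR -> m2 \in Mgood -> m2 \notin NR ->
    sig m1 (noerr cN n) (edge_z' i) = sig m2 (noerr cN n) (edge_z' i) ->
    sig m1 (noerr cN n) (edge_b i) = sig m2 (noerr cN n) (edge_b i).
  move=> m1 m2 g1 n1 g2 n2 hz.
  pose v1 : V1 := vxor (sig m1 (noerr cN n) (edge_y i)) (sig m2 (noerr cN n) (edge_y i)).
  pose v2 : V1 := vxor (sig m2 (noerr cN n) (edge_x i)) (sig m1 (noerr cN n) (edge_x i)).
  pose r1 := errK cN n isY i v1.
  pose r2 := errK cN n isX i v2.
  have a1 : admissible r1 by apply: errK_adm; apply: isY_ok.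
  have a2 : admissible r2 by apply: errK_adm; apply: isX_ok.
  have hr1 := errK_hr VN headN sN cN n isY i v1 isY_ok.
  have hr2 := errK_hr VN headN sN cN n isX i v2 isX_ok.
  have h1 : sig m1 r1 (edge_b i) = sig m1 (noerr cN n) (edge_b i).
    have := rigid m1 _ g1 n1 (goodE m1 r1 g1 a1).
    by move/(congr1 (fun t : Tup => t i)); rewrite !ffunE.
  have h2 : sig m2 r2 (edge_b i) = sig m2 (noerr cN n) (edge_b i).
    have := rigid m2 _ g2 n2 (goodE m2 r2 g2 a2).
    by move/(congr1 (fun t : Tup => t i)); rewrite !ffunE.
  rewrite -h1 -h2.
  rewrite (@bsig VN EN k tailN headN sN tN cN n hacyc enc sig hsig m1 r1 hr1 i) (@bsig VN EN k tailN headN sN tN cN n hacyc enc sig hsig m2 r2 hr2 i) /=.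
  congr vxor; rewrite (henc (edge_b i) _ m1 m2) //.
  congr (enc _ m2).
  apply: functional_extensionality_dep => e'.
  apply: functional_extensionality_dep => h.
  move: h; case: e' => [e0|[[] j]] //= h; case: h => hj; subst j; rewrite ?eqxx /=.
  - by apply/ffunP => t; rewrite !ffunE /= addbF addbA addbb.
  - by apply/ffunP => t; rewrite !ffunE /= addbF addbA addbb.
  - by rewrite /edge_z' in hz; rewrite hz.
pose f := fun m => (sig m (noerr cN n) (edge_z' i) : V1).
set Bad := [set m in Mgood | psi _ != _].
have hbad : (#|Bad| <= #|NR|)%N.
  rewrite (@card_fib _ _ f Bad) (@card_fib _ _ f NR); apply: leq_sum => zh _.
  pose Gz := [set m in Mgood | f m == zh].
  pose Bz := [set m in Mgood | (sig m (noerr cN n) (edge_z' i) == zh)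
                          && (sig m (noerr cN n) (edge_b i) == psi zh)].
  have e1 : [set x in Bad | f x == zh] = Gz :\: Bz.
    apply/setP => m; rewrite !inE /f; case: (m \in Mgood) => //=.
    case: (boolP (sig m (noerr cN n) (edge_z' i) == zh)) => h; last by rewrite !andbF.
    by rewrite (eqP h) !andbT eq_sym.
  have e2 : Gz :&: Bz = Bz.
    apply/setP => m; rewrite !inE /f; case: (m \in Mgood) => //=.
    by case: eqP.
  have e3 : [set x in NR | f x == zh] = Gz :&: NR.
    apply/setP => m; rewrite !inE; case: (m \in Mgood) => //=; by rewrite andbC.
  have hR : (#|Gz :\: NR| <= #|Bz|)%N.
    case: (set_0Vmem (Gz :\: NR)) => [->|[m0 hm0]]; first by rewrite cards0.
    apply: leq_trans (hpsi zh (sig m0 (noerr cN n) (edge_b i))).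
    apply: subset_leq_card; apply/subsetP => m hm.
    move: hm hm0; rewrite !inE /f => /andP[hn /andP[hg /eqP hz]] /andP[hn0 /andP[hg0 /eqP hz0]].
    rewrite hg /= hz eqxx /=.
    have hn' : m \notin NR by rewrite inE.
    have hn0' : m0 \notin NR by rewrite inE.
    by rewrite (hkey m m0 hg hn' hg0 hn0') ?hz ?hz0.
  have A := cardsID Bz Gz; have B := cardsID NR Gz.
  rewrite e1 e3; rewrite e2 in A.
  lia.
have hN : (#|Mgood| <= 2 ^ (k * n))%N by apply: leq_trans (leq_addr _ _) hcount.
have : (#|Bad|%:R : R) <= (2 ^ (k * n))%N%:R - #|Mgood|%:R.
  rewrite -natrB // ler_nat; lia.
have : 0 <= eps * (2 ^ (k * n))%N%:R by apply: mulr_ge0 => //; apply: ler0n.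
lra.
Qed.
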